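(* For every nonnegative integer $p$, let $\mathfrak s\subset\mathfrak{sp}(V^{\mathfrak{sp}}_{p;2p})$ be an $\mathfrak{sl}_2$-subalgebra containing $\delta^{\mathfrak{sp}}_{p;2p}$, spanned by elements of degrees $-1,0,1$, for which $E=\operatorname{span}\{e_i\}$ and $F=\operatorname{span}\{f_i\}$ are irreducible submodules. Then the maximal $\operatorname{ad}\mathfrak s$-submodule $\mathfrak l^{\mathfrak{sp}}(V^{\mathfrak{sp}}_{p;2p})$ of $\mathfrak{sp}(V^{\mathfrak{sp}}_{p;2p})$ contained in the nonnegative-degree part is a Lie subalgebra isomorphic to $\mathfrak{sl}_2$. Moreover, for every $m\in\frac12\mathbb Z_{\rm odd}$, $m>0$, and the analogous $\mathfrak{sl}_2$-subalgebra of $\mathfrak{sp}(\mathcal L^{\mathfrak{sp}}_m)$ containing $\tau^{\mathfrak{sp}}_m$ (acting irreducibly), the corresponding maximal submodule $\mathfrak l^{\mathfrak{sp}}(\mathcal L^{\mathfrak{sp}}_m)$ is $0$.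
   Context: $V^{\mathfrak{sp}}_{p;2p}$ is the symplectic space with basis $e_{-p},\dots,e_p,f_{-p},\dots,f_p$ (index $=$ degree), $\sigma(e_i,e_j)=\sigma(f_i,f_j)=0$, $\sigma(e_i,f_j)=(-1)^{p-i}$ if $j=-i$ and $0$ otherwise; $\delta^{\mathfrak{sp}}_{p;2p}(e_i)=e_{i-1}$, $\delta^{\mathfrak{sp}}_{p;2p}(f_i)=f_{i-1}$ for $i>-p$, $\delta^{\mathfrak{sp}}_{p;2p}(e_{-p})=\delta^{\mathfrak{sp}}_{p;2p}(f_{-p})=0$. $\frac12\mathbb Z_{\rm odd}=\{i+\frac12:i\in\mathbb Z\}$; $\mathcal L^{\mathfrak{sp}}_m=\bigoplus_{i\in\frac12\mathbb Z_{\rm odd},|i|\le m}E_i$ with $\dim E_i=1$ in degree $i$, a symplectic space with $\sigma(E_i,E_j)=0$ unless $i+j=0$, and $\tau^{\mathfrak{sp}}_m\in\mathfrak{sp}(\mathcal L^{\mathfrak{sp}}_m)$ maps $E_i$ onto $E_{i-1}$ ($i>-m$) and $E_{-m}$ to $0$. Gradings on endomorphism spaces: degree-$k$ maps send degree-$i$ vectors to degree $i+k$. *)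

(* Defs.v *)
From HB Require Import structures.
From mathcomp Require Import all_boot all_order all_algebra.
Set Implicit Arguments. Unset Strict Implicit. Unset Printing Implicit Defensive.
Import Order.TTheory GRing.Theory Num.Theory.
Local Open Scope ring_scope.

(* ---------- generic notions (row-vector convention: v acts as v *m A) ------ *)
(* Basis vectors b_i, i : 'I_n; b_i *m A = \sum_j A i j b_j.
   A symplectic form is given by a matrix Om, sigma(u,w) = u *m Om *m w^T. *)

Definition lieb (F : fieldType) (n : nat) (A B : 'M[F]_n) : 'M[F]_n :=
  A *m B - B *m A.

(* A in sp(V, Om): sigma(uA,w) + sigma(u,wA) = 0 for all u, w. *)
Definition in_sp (F : fieldType) (n : nat) (Om A : 'M[F]_n) : Prop :=
  A *m Om + Om *m A^T = 0.

Definition homog (F : fieldType) (n : nat) (deg : 'I_n -> rat) (k : int)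
  (A : 'M[F]_n) : Prop :=
  forall i j, A i j != 0 -> deg j = deg i + k%:~R.

Definition nonneg_deg (F : fieldType) (n : nat) (deg : 'I_n -> rat)
  (A : 'M[F]_n) : Prop :=
  forall i j, A i j != 0 -> deg i <= deg j.

Definition span3 (F : fieldType) (n : nat) (X Y Z A : 'M[F]_n) : Prop :=
  exists a b c : F, A = a *: X + b *: Y + c *: Z.

Definition indep3 (F : fieldType) (n : nat) (X Y Z : 'M[F]_n) : Prop :=
  forall a b c : F, a *: X + b *: Y + c *: Z = 0 -> [/\ a = 0, b = 0 & c = 0].

Definition sl2_triple (F : fieldType) (n : nat) (X H Y : 'M[F]_n) : Prop :=
  [/\ lieb H X = 2%:R *: X, lieb H Y = - (2%:R *: Y) & lieb X Y = H].

Definition graded_sl2 (F : fieldType) (n : nat) (deg : 'I_n -> rat)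
  (Om x h d : 'M[F]_n) : Prop :=
  [/\ [/\ in_sp Om x, in_sp Om h & in_sp Om d],
      [/\ homog deg 1 x, homog deg 0 h & homog deg (-1) d],
      sl2_triple x h d & indep3 x h d].

Definition s_stable (F : fieldType) (n : nat) (x h d W : 'M[F]_n) : bool :=
  [&& (W *m x <= W)%MS, (W *m h <= W)%MS & (W *m d <= W)%MS].

Definition irreducible_sub (F : fieldType) (n : nat) (x h d W : 'M[F]_n) : Prop :=
  [/\ s_stable x h d W, (0 < \rank W)%N &
      forall U : 'M[F]_n, s_stable x h d U -> (U <= W)%MS ->
        \rank U = 0%N \/ (U == W)%MS].

Definition ad_submodule (F : fieldType) (n : nat) (x h d : 'M[F]_n)
  (U : 'M[F]_n -> Prop) : Prop :=
  [/\ U 0, (forall A B, U A -> U B -> U (A + B)),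
      (forall (c : F) A, U A -> U (c *: A)) &
      (forall S A, span3 x h d S -> U A -> U (lieb S A))].

(* membership in the maximal ad s-submodule of sp(V,Om) contained in the
   nonnegative-degree part (= union/sum of all such submodules) *)
Definition in_lmax (F : fieldType) (n : nat) (deg : 'I_n -> rat)
  (Om x h d : 'M[F]_n) (A : 'M[F]_n) : Prop :=
  exists U : 'M[F]_n -> Prop,
    [/\ ad_submodule x h d U,
        (forall B, U B -> in_sp Om B /\ nonneg_deg deg B) & U A].

(* indices: lshift k <-> e_{k-p}, rshift k <-> f_{k-p}, k < 2p+1 *)
Notation nV p := (p.*2.+1 + p.*2.+1)%N.

Definition degV (p : nat) (i : 'I_(nV p)) : rat :=
  match split i with inl k => (k : nat)%:R - p%:R | inr k => (k : nat)%:R - p%:R end.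

(* sigma(e_i, f_{-i}) = (-1)^(p-i); with i = a - p this is (-1)^a *)
Definition OmegaV (F : fieldType) (p : nat) : 'M[F]_(nV p) :=
  \matrix_(i, j)
    match split i, split j with
    | inl a, inr b => if (a + b == p.*2)%N then (-1) ^+ a else 0
    | inr b, inl a => if (a + b == p.*2)%N then - (-1) ^+ a else 0
    | _, _ => 0
    end.

(* delta(e_i) = e_{i-1}, delta(f_i) = f_{i-1}, delta(e_{-p}) = delta(f_{-p}) = 0 *)
Definition deltaV (F : fieldType) (p : nat) : 'M[F]_(nV p) :=
  \matrix_(i, j)
    match split i, split j with
    | inl a, inl b => ((a : nat) == b.+1)%:R
    | inr a, inr b => ((a : nat) == b.+1)%:R
    | _, _ => 0
    end.

Definition is_e (p : nat) (i : 'I_(nV p)) : bool :=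
  if split i is inl _ then true else false.

(* row spaces of E = span{e_i} and F = span{f_i} *)
Definition Espace (F : fieldType) (p : nat) : 'M[F]_(nV p) :=
  \matrix_(i, j) ((i == j) && is_e i)%:R.
Definition Fspace (F : fieldType) (p : nat) : 'M[F]_(nV p) :=
  \matrix_(i, j) ((i == j) && ~~ is_e i)%:R.

(* index j : 'I_(2k+2) <-> E_{j - m}, dimension 2m+1 = 2k+2 *)
Definition degL (k : nat) (j : 'I_(k.*2.+2)) : rat :=
  (j : nat)%:R - (k%:R + 2%:R^-1).

(* Main.v *)
Require Import Defs.
From HB Require Import structures.
From mathcomp Require Import all_boot all_order all_algebra.
From mathcomp Require Import zify ring.
Set Implicit Arguments. Unset Strict Implicit. Unset Printing Implicit Defensive.
Import Order.TTheory GRing.Theory Num.Theory.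
Local Open Scope ring_scope.



Section Band.
Variable F : fieldType.

Definition band n (t : nat) (M : 'M[F]_n) :=
  forall i j : 'I_n, M i j != 0 -> (i + t <= j)%N.

Variables (n : nat) (tau : 'M[F]_n).
Hypothesis T1 : forall i j : 'I_n, tau i j != 0 -> (j : nat).+1 = i.
Hypothesis T2 : forall i j : 'I_n, (j : nat).+1 = i -> tau i j != 0.

Lemma liebE (A B : 'M[F]_n) i j : lieb A B i j = (A *m B) i j - (B *m A) i j.
Proof. by rewrite /lieb !mxE. Qed.

Lemma L1 t M : band t.+1 M -> band t (lieb tau M).
Proof.
move=> HM i j; apply: contraR => Hij.
have E1 : (tau *m M) i j = 0.
  rewrite mxE big1 // => l _.
  have [->|/T1 Hl] := eqVneq (tau i l) 0; first by rewrite mul0r.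
  have [->|/HM Hm] := eqVneq (M l j) 0; first by rewrite mulr0.
  exfalso; move/negP: Hij; apply; lia.
have E2 : (M *m tau) i j = 0.
  rewrite mxE big1 // => l _.
  have [->|/T1 Hl] := eqVneq (tau l j) 0; first by rewrite mulr0.
  have [->|/HM Hm] := eqVneq (M i l) 0; first by rewrite mul0r.
  exfalso; move/negP: Hij; apply; lia.
by rewrite liebE E1 E2 subrr.
Qed.

Lemma L2 t M : band t.+1 M -> band t.+1 (lieb tau M) -> band t.+2 M.
Proof.
move=> HM HL.
have key : forall k (i j : 'I_n), (i:nat) = k -> (j:nat) = (i + t.+1)%N -> M i j = 0.
  elim/ltn_ind => k IH i j Hi Hj.
  have Hj' : ((i + t)%N < n)%N by move: (ltn_ord j); lia.
  set j' := Ordinal Hj'.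
  have H0 : lieb tau M i j' = 0 by apply/eqP; apply: contraT => /HL /=; lia.
  have E1 : (tau *m M) i j' = 0.
    rewrite mxE big1 // => l _.
    have [->|/T1 Hl] := eqVneq (tau i l) 0; first by rewrite mul0r.
    by rewrite (IH l) ?mulr0 //=; lia.
  have E2 : (M *m tau) i j' = M i j * tau j j'.
    rewrite mxE (bigD1 j) //= big1 ?addr0 // => l /negP Hl.
    have [->|/T1 Hl2] := eqVneq (tau l j') 0; first by rewrite mulr0.
    rewrite /j' /= in Hl2.
    exfalso; apply: Hl; apply/eqP/val_inj => /=; lia.
  have Ht : tau j j' != 0 by apply: T2; rewrite /j' /=; lia.
  move: H0; rewrite liebE E1 E2 sub0r => /eqP; rewrite oppr_eq0 mulf_eq0 (negbTE Ht) orbF.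
  by move/eqP.
move=> i j Hne; have Hij := HM i j Hne.
have [Heq|Hneq] := eqVneq (j:nat) (i + t.+1)%N.
  by rewrite (key _ i j erefl Heq) eqxx in Hne.
lia.
Qed.

Lemma L3 M : band 0 M -> band 0 (lieb tau M) ->
  forall i j : 'I_n, (j:nat) = (i:nat).+1 -> M i i = M j j.
Proof.
move=> HM HL i j Hij.
have H0 : lieb tau M j i = 0 by apply/eqP; apply: contraT => /HL /=; lia.
have E1 : (tau *m M) j i = tau j i * M i i.
  rewrite mxE (bigD1 i) //= big1 ?addr0 // => l /negP Hl.
  have [->|/T1 Hl2] := eqVneq (tau j l) 0; first by rewrite mul0r.
  exfalso; apply: Hl; apply/eqP/val_inj => /=; lia.
have E2 : (M *m tau) j i = M j j * tau j i.
  rewrite mxE (bigD1 j) //= big1 ?addr0 // => l /negP Hl.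
  have [->|/T1 Hl2] := eqVneq (tau l i) 0; first by rewrite mulr0.
  exfalso; apply: Hl; apply/eqP/val_inj => /=; lia.
have Ht : tau j i != 0 by apply: T2; lia.
move: H0; rewrite liebE E1 E2 [M j j * _]mulrC -mulrBr => /eqP.
rewrite mulf_eq0 (negbTE Ht) /= subr_eq0 => /eqP //.
Qed.

End Band.

Section Good.
Variable F : fieldType.
Variables (n : nat) (tau : 'M[F]_n.+1).
Hypothesis T1 : forall i j : 'I_n.+1, tau i j != 0 -> (j : nat).+1 = i.
Hypothesis T2 : forall i j : 'I_n.+1, (j : nat).+1 = i -> tau i j != 0.
Hypothesis Hn : (n.+1)%:R != 0 :> F.

Definition Good (M : 'M[F]_n.+1) := forall r, band 0 (iter r (lieb tau) M).

Lemma diag_const M : band 0 M -> band 0 (lieb tau M) ->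
  forall i : 'I_n.+1, M i i = M ord0 ord0.
Proof.
move=> H0 H1.
suff : forall k (i : 'I_n.+1), (i:nat) = k -> M i i = M ord0 ord0 by move=> /(_ _ _ erefl).
elim=> [|k IH] i Hi.
  by have -> : i = ord0 by apply: val_inj.
have Hk : (k < n.+1)%N by move: (ltn_ord i); lia.
rewrite -(L3 T1 T2 H0 H1 (i:=Ordinal Hk)) /=; last by lia.
exact: IH.
Qed.

Lemma trace_lieb (A B : 'M[F]_n.+1) : \tr (lieb A B) = 0.
Proof. by rewrite /lieb raddfB /= mxtrace_mulC subrr. Qed.

Lemma trace_const (M : 'M[F]_n.+1) : (forall i : 'I_n.+1, M i i = M ord0 ord0) ->
  \tr M = M ord0 ord0 *+ n.+1.
Proof.
move=> H; rewrite /mxtrace (eq_bigr (fun _ => M ord0 ord0)) ?sumr_const ?card_ord //.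
Qed.

Lemma Lstep s M : Good M -> band s.+1 M -> band s.+2 M.
Proof.
move=> HG HM.
pose N r := iter r (lieb tau) M.
have NS : forall r, N r.+1 = lieb tau (N r) by move=> r; rewrite /N iterS.
have Fw : forall r, (r <= s.+1)%N -> band (s.+1 - r)%N (N r).
  elim=> [|r IH] Hr; first by rewrite subn0.
  rewrite NS; have -> : (s.+1 - r.+1 = s - r)%N by lia.
  apply: (L1 T1); have <- : (s.+1 - r = (s - r).+1)%N by lia.
  apply: IH; lia.
have B1 : band 1 (N s.+1).
  have H0 : band 0 (N s.+1) := HG s.+1.
  have H1 : band 0 (lieb tau (N s.+1)) by rewrite -NS; exact: HG s.+2.
  have Hd := diag_const H0 H1.
  have Htr : \tr (N s.+1) = 0 by rewrite NS trace_lieb.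
  rewrite trace_const // -mulr_natr in Htr.
  have Hz : N s.+1 ord0 ord0 = 0.
    by move/eqP: Htr; rewrite mulf_eq0 (negbTE Hn) orbF => /eqP.
  move=> i j Hne; have := H0 i j Hne.
  have [Heq|Hneq] := eqVneq (i:nat) (j:nat); last by lia.
  have Eij : i = j by apply: val_inj.
  by rewrite -Eij Hd Hz eqxx in Hne.
have Bw : forall q, (q <= s.+1)%N -> band q.+1 (N (s.+1 - q)%N).
  elim=> [|q IH] Hq; first by rewrite subn0.
  have Hr : (s.+1 - q = (s.+1 - q.+1).+1)%N by lia.
  apply: (L2 T1 T2).
    have E : (s.+1 - (s.+1 - q.+1) = q.+1)%N by lia.
    by rewrite -{1}E; apply: Fw; lia.
  rewrite -NS -Hr; apply: IH; lia.
have := Bw s.+1 (leqnn _); by rewrite subnn.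
Qed.

Lemma Lzero M : Good M -> band 1 M -> M = 0.
Proof.
move=> HG HM.
have Hb : forall s, band s.+1 M.
  elim=> // s IH; exact: Lstep.
apply/matrixP => i j; rewrite mxE; apply/eqP; apply: contraT => /(Hb n) /=.
move: (ltn_ord j); lia.
Qed.

Lemma lieb_scalar (c : F) : lieb tau c%:M = 0.
Proof. by rewrite /lieb scalar_mxC subrr. Qed.

Lemma Lscalar M : Good M -> M = (M ord0 ord0)%:M.
Proof.
move=> HG.
set c := M ord0 ord0.
have Hd := diag_const (HG 0%N) (HG 1%N).
have GM' : Good (M - c%:M).
  case=> [|r].
    move=> i j /=; rewrite !mxE.
    have [Heq|Hneq] := eqVneq i j; first by rewrite Heq; lia.
    rewrite mulr0n subr0; exact: (HG 0%N).
  have -> : iter r.+1 (lieb tau) (M - c%:M) = iter r.+1 (lieb tau) M.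
    rewrite !iterSr; congr iter.
    by rewrite /lieb mulmxBr mulmxBl scalar_mxC opprB addrA subrK.
  exact: HG.
have B1 : band 1 (M - c%:M).
  move=> i j /=; rewrite !mxE.
  have [Heq|Hneq] := eqVneq i j.
    by rewrite Heq mulr1n Hd subrr eqxx.
  rewrite mulr0n subr0 => /(HG 0%N) /=.
  have : (i:nat) != j by apply: contra Hneq => /eqP Hv; apply/eqP/val_inj.
  lia.
have := Lzero GM' B1; move/eqP; rewrite subr_eq0 => /eqP //.
Qed.

End Good.


Section Uniq.
Variable F : fieldType.
Variables (n : nat) (tau : 'M[F]_n.+1).
Hypothesis T1 : forall i j : 'I_n.+1, tau i j != 0 -> (j : nat).+1 = i.
Hypothesis T2 : forall i j : 'I_n.+1, (j : nat).+1 = i -> tau i j != 0.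
Hypothesis Hn : (n.+1)%:R != 0 :> F.

Lemma liebBl (A B C : 'M[F]_n.+1) : lieb (A - B) C = lieb A C - lieb B C.
Proof. by rewrite /lieb mulmxBl mulmxBr; apply/matrixP => i j; rewrite !mxE; ring. Qed.

Lemma liebN (A B : 'M[F]_n.+1) : lieb A B = - lieb B A.
Proof. by rewrite /lieb opprB. Qed.

Lemma sub_neq0 (a b : F) : a - b != 0 -> a != 0 \/ b != 0.
Proof.
move=> H; have [E|] := eqVneq a 0; last by left.
by right; move: H; rewrite E sub0r oppr_eq0.
Qed.

Lemma uniq_sl2 (x1 h1 x4 h4 : 'M[F]_n.+1) :
  (forall i j, h1 i j != 0 -> i = j) -> (forall i j, h4 i j != 0 -> i = j) ->
  (forall i j, x1 i j != 0 -> (j:nat) = (i:nat).+1) ->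
  (forall i j, x4 i j != 0 -> (j:nat) = (i:nat).+1) ->
  lieb h1 tau = lieb h4 tau -> lieb x1 tau = h1 -> lieb x4 tau = h4 -> h1 = h4 /\ x1 = x4.
Proof.
move=> Hh1 Hh4 Hx1 Hx4 Eh Ex1 Ex4.
have hhE : lieb (x1 - x4) tau = h1 - h4 by rewrite liebBl Ex1 Ex4.
have hhT : lieb tau (h1 - h4) = 0 by rewrite liebN liebBl Eh subrr oppr0.
have Hoff : forall i j, (h1 - h4) i j != 0 -> i = j.
  move=> i j; rewrite !mxE => /sub_neq0 [/Hh1|/Hh4] //.
have B0 : band 0 (h1 - h4) by move=> i j /Hoff ->; rewrite addn0.
have B1 : band 0 (lieb tau (h1 - h4)) by rewrite hhT => i j; rewrite mxE eqxx.
have Hd := diag_const T1 T2 Hn B0 B1.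
have Htr : \tr (h1 - h4) = 0 by rewrite -hhE trace_lieb.
rewrite trace_const // -mulr_natr in Htr.
have Hz : (h1 - h4) ord0 ord0 = 0.
  by move/eqP: Htr; rewrite mulf_eq0 (negbTE Hn) orbF => /eqP.
have Ehh : h1 - h4 = 0.
  apply/matrixP => i j; rewrite [RHS]mxE.
  have [Heq|Hneq] := eqVneq i j; first by rewrite Heq Hd Hz.
  by apply/eqP; apply: contraT => /Hoff E; rewrite E eqxx in Hneq.
have xxT : lieb tau (x1 - x4) = 0 by rewrite liebN hhE Ehh oppr0.
have Hx : forall i j, (x1 - x4) i j != 0 -> (j:nat) = (i:nat).+1.
  move=> i j; rewrite !mxE => /sub_neq0 [/Hx1|/Hx4] //.
have C1 : band 1 (x1 - x4) by move=> i j /Hx ->; rewrite addn1.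
have C2 : band 1 (lieb tau (x1 - x4)) by rewrite xxT => i j; rewrite mxE eqxx.
have C3 := L2 T1 T2 C1 C2.
split; first by apply/eqP; rewrite -subr_eq0 Ehh.
apply/eqP; rewrite -subr_eq0; apply/eqP/matrixP => i j; rewrite [RHS]mxE.
apply/eqP; apply: contraT => H; have := C3 i j H; rewrite (Hx i j H); lia.
Qed.
End Uniq.

Section Part2.
Variable F : closedFieldType.
Hypothesis charF0 : [pchar F] =i pred0.

Lemma natr_neq0 (n : nat) : (n.+1)%:R != 0 :> F.
Proof. by rewrite ((pcharf0P F).1 charF0). Qed.

Lemma part2 (k : nat) (Om tau x h : 'M[F]_(k.*2.+2)) :
     Om^T = - Om -> Om \in unitmx ->
     (forall i j, Om i j != 0 -> degL i + degL j = 0) ->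
     in_sp Om tau ->
     (forall i j : 'I_(k.*2.+2), tau i j != 0 -> (j : nat).+1 = i) ->
     (forall i j : 'I_(k.*2.+2), (j : nat).+1 = i -> tau i j != 0) ->
     graded_sl2 (@degL k) Om x h tau ->
     irreducible_sub x h tau 1%:M ->
     forall A, in_lmax (@degL k) Om x h tau A -> A = 0.
Proof.
move=> _ HOm _ _ T1 T2 _ _ A [U [[U0 Uadd Uscale Ulieb] HU HA]].
have Ut : forall B, U B -> U (lieb tau B).
  move=> B HB; apply: Ulieb => //; exists 0, 0, 1.
  by rewrite !scale0r !add0r scale1r.
have Uiter : forall r B, U B -> U (iter r (lieb tau) B).
  by elim=> // r IH B HB; rewrite iterS; apply: Ut; apply: IH.
have Ub : forall B, U B -> band 0 B.
  move=> B /HU [_ Hn] i j /Hn; rewrite /degL lerD2r ler_nat addn0 //.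
have HG : Good tau A by move=> r; apply: Ub; apply: Uiter.
have EA := Lscalar T1 T2 (natr_neq0 _) HG.
set c := A ord0 ord0 in EA.
have [Hsp _] := HU A HA.
move: Hsp; rewrite /in_sp EA tr_scalar_mx mul_scalar_mx mul_mx_scalar -scalerDl.
move/eqP; rewrite scaler_eq0 => /orP [Hc|HO].
  have : c * 2%:R = 0 by rewrite mulr_natr mulr2n (eqP Hc).
  move/eqP; rewrite mulf_eq0 (negbTE (natr_neq0 1)) orbF => /eqP Hc0.
  by rewrite Hc0 raddf0.
move: HOm; rewrite (eqP HO) unitmxE det0 unitr0 //.
Qed.
End Part2.



Lemma splitl m n (a : 'I_m) : split (lshift n a) = inl a.
Proof. exact: (unsplitK (inl a)). Qed.
Lemma splitr m n (b : 'I_n) : split (rshift m b) = inr b.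
Proof. exact: (unsplitK (inr b)). Qed.

Lemma lr_neq m n (a : 'I_m) (b : 'I_n) : (lshift n a == rshift m b) = false.
Proof. apply/negbTE; rewrite -val_eqE /=; move: (ltn_ord a); lia. Qed.
Lemma rl_neq m n (a : 'I_m) (b : 'I_n) : (rshift m b == lshift n a) = false.
Proof. by rewrite eq_sym lr_neq. Qed.
Lemma ll_eq m n (a b : 'I_m) : (lshift n a == lshift n b) = (a == b).
Proof. exact: (inj_eq (@lshift_inj _ _)). Qed.
Lemma rr_eq m n (a b : 'I_n) : (rshift m a == rshift m b) = (a == b).
Proof. exact: (inj_eq (@rshift_inj _ _)). Qed.

Section P1.
Variable F : fieldType.
Variable p : nat.
Local Notation m := (p.*2.+1).

Definition Jm : 'M[F]_m := \matrix_(a, b) ((a:nat) == b.+1)%:R.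
Definition Wm : 'M[F]_m := \matrix_(a, b) (if (a + b == p.*2)%N then (-1)^+a else 0).

Ltac bsplit i := rewrite -[i]splitK; case: (split i) => ? /=.

Lemma deltaV_block : deltaV F p = block_mx Jm 0 0 Jm.
Proof.
apply/matrixP => i j; bsplit i; bsplit j;
rewrite ?block_mxEul ?block_mxEur ?block_mxEdl ?block_mxEdr !mxE ?splitl ?splitr //.
Qed.

Lemma Espace_block : Espace F p = block_mx 1%:M 0 0 0.
Proof.
apply/matrixP => i j; bsplit i; bsplit j;
rewrite ?block_mxEul ?block_mxEur ?block_mxEdl ?block_mxEdr !mxE ?lr_neq ?rl_neq ?ll_eq ?rr_eq /is_e ?splitl ?splitr ?andbT ?andbF //.
Qed.

Lemma Fspace_block : Fspace F p = block_mx 0 0 0 1%:M.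
Proof.
apply/matrixP => i j; bsplit i; bsplit j;
rewrite ?block_mxEul ?block_mxEur ?block_mxEdl ?block_mxEdr !mxE ?lr_neq ?rl_neq ?ll_eq ?rr_eq /is_e ?splitl ?splitr ?andbT ?andbF //.
Qed.

Lemma OmegaV_block : OmegaV F p = block_mx 0 Wm (- Wm) 0.
Proof.
apply/matrixP => i j; bsplit i; bsplit j;
rewrite ?block_mxEul ?block_mxEur ?block_mxEdl ?block_mxEdr !mxE ?splitl ?splitr //.
rewrite addnC; case: eqP => [H|_]; last by rewrite oppr0.
rewrite -signr_odd -[(-1) ^+ _ in RHS]signr_odd; congr (- (-1) ^+ _).
have := congr1 odd H; rewrite oddD odd_double; case: (odd _); case: (odd _) => //.
Qed.

Lemma degV_l (a : 'I_m) : degV (lshift m a) = (a:nat)%:R - p%:R.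
Proof. by rewrite /degV splitl. Qed.
Lemma degV_r (a : 'I_m) : degV (rshift m a) = (a:nat)%:R - p%:R.
Proof. by rewrite /degV splitr. Qed.


Lemma stabE (X : 'M[F]_(m + m)) : (Espace F p *m X <= Espace F p)%MS -> ursubmx X = 0.
Proof.
move=> /submxP [D]; rewrite Espace_block -{1}[X]submxK -[D]submxK !mulmx_block.
rewrite !mul1mx !mul0mx !mulmx1 !mulmx0 !addr0 => /eq_block_mx [_ -> _ _] //.
Qed.

Lemma stabF (X : 'M[F]_(m + m)) : (Fspace F p *m X <= Fspace F p)%MS -> dlsubmx X = 0.
Proof.
move=> /submxP [D]; rewrite Fspace_block -{1}[X]submxK -[D]submxK !mulmx_block.
rewrite !mul1mx !mul0mx !mulmx1 !mulmx0 !addr0 !add0r => /eq_block_mx [_ _ -> _] //.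
Qed.

Definition sblock (c1 c2 c3 c4 : F) : 'M[F]_(m + m) :=
  block_mx c1%:M c2%:M c3%:M c4%:M.

Lemma sblock_congr c1 c2 c3 c4 d1 d2 d3 d4 :
  c1 = d1 -> c2 = d2 -> c3 = d3 -> c4 = d4 -> sblock c1 c2 c3 c4 = sblock d1 d2 d3 d4.
Proof. by move=> -> -> -> ->. Qed.

Lemma sblockD c1 c2 c3 c4 d1 d2 d3 d4 :
  sblock c1 c2 c3 c4 + sblock d1 d2 d3 d4 = sblock (c1 + d1) (c2 + d2) (c3 + d3) (c4 + d4).
Proof. by rewrite /sblock add_block_mx !raddfD. Qed.

Lemma sblockZ a c1 c2 c3 c4 :
  a *: sblock c1 c2 c3 c4 = sblock (a * c1) (a * c2) (a * c3) (a * c4).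
Proof. by rewrite /sblock scale_block_mx !scale_scalar_mx. Qed.

Lemma sblockN c1 c2 c3 c4 :
  - sblock c1 c2 c3 c4 = sblock (- c1) (- c2) (- c3) (- c4).
Proof. by rewrite /sblock opp_block_mx !raddfN. Qed.

Lemma sblockM c1 c2 c3 c4 d1 d2 d3 d4 :
  sblock c1 c2 c3 c4 *m sblock d1 d2 d3 d4 =
  sblock (c1 * d1 + c2 * d3) (c1 * d2 + c2 * d4) (c3 * d1 + c4 * d3) (c3 * d2 + c4 * d4).
Proof. by rewrite /sblock mulmx_block -!scalar_mxM -!raddfD. Qed.

Lemma lieb_sblock c1 c2 c3 c4 d1 d2 d3 d4 :
  lieb (sblock c1 c2 c3 c4) (sblock d1 d2 d3 d4) =
  sblock (c1 * d1 + c2 * d3 - (d1 * c1 + d2 * c3))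
         (c1 * d2 + c2 * d4 - (d1 * c2 + d2 * c4))
         (c3 * d1 + c4 * d3 - (d3 * c1 + d4 * c3))
         (c3 * d2 + c4 * d4 - (d3 * c2 + d4 * c4)).
Proof. by rewrite /lieb !sblockM sblockN sblockD. Qed.

Lemma scalar_eq0 (c : F) : (c%:M : 'M[F]_m) = 0 -> c = 0.
Proof. by move/matrixP/(_ ord0 ord0); rewrite !mxE mulr1n. Qed.

Lemma sblock_eq0 c1 c2 c3 c4 : sblock c1 c2 c3 c4 = 0 ->
  [/\ c1 = 0, c2 = 0, c3 = 0 & c4 = 0].
Proof.
rewrite /sblock -(block_mx0 _ m m m m) => /eq_block_mx [/scalar_eq0 ? /scalar_eq0 ? /scalar_eq0 ? /scalar_eq0 ?].
by split.
Qed.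

Lemma lieb_dblock (P Q B1 B2 B3 B4 : 'M[F]_m) :
  lieb (block_mx P 0 0 Q) (block_mx B1 B2 B3 B4) =
  block_mx (P *m B1 - B1 *m P) (P *m B2 - B2 *m Q) (Q *m B3 - B3 *m P) (Q *m B4 - B4 *m Q).
Proof.
rewrite /lieb !mulmx_block !mul0mx !mulmx0 !addr0 !add0r opp_block_mx add_block_mx //.
Qed.

Lemma lieb_diag (P Q B1 B4 : 'M[F]_m) :
  lieb (block_mx P 0 0 Q) (block_mx B1 0 0 B4) = block_mx (lieb P B1) 0 0 (lieb Q B4).
Proof. by rewrite lieb_dblock !mulmx0 !mul0mx subrr. Qed.

Lemma iter_block r (B1 B2 B3 B4 : 'M[F]_m) :
  iter r (lieb (block_mx Jm 0 0 Jm)) (block_mx B1 B2 B3 B4) =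
  block_mx (iter r (lieb Jm) B1) (iter r (lieb Jm) B2) (iter r (lieb Jm) B3) (iter r (lieb Jm) B4).
Proof. by elim: r => // r IH; rewrite !iterS IH lieb_dblock. Qed.

Lemma lieb_dscalar (Q : 'M[F]_m) c1 c2 c3 c4 :
  lieb (block_mx Q 0 0 Q) (sblock c1 c2 c3 c4) = 0.
Proof.
by rewrite /sblock lieb_dblock -!scalar_mxC !subrr block_mx0.
Qed.

Lemma degle (a b : 'I_m) : ((a:nat)%:R - p%:R <= (b:nat)%:R - p%:R :> rat) = (a <= b)%N.
Proof. by rewrite lerD2r ler_nat. Qed.

Lemma nonneg_block (A1 A2 A3 A4 : 'M[F]_m) :
  nonneg_deg (@degV p) (block_mx A1 A2 A3 A4) <->
  [/\ band 0 A1, band 0 A2, band 0 A3 & band 0 A4].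
Proof.
split.
  move=> H; split=> a b Hab; rewrite addn0 -degle.
  - by rewrite -degV_l -degV_l; apply: H; rewrite block_mxEul.
  - by rewrite -degV_l -degV_r; apply: H; rewrite block_mxEur.
  - by rewrite -degV_r -degV_l; apply: H; rewrite block_mxEdl.
  - by rewrite -degV_r -degV_r; apply: H; rewrite block_mxEdr.
move=> [H1 H2 H3 H4] i j; bsplit i; bsplit j;
rewrite ?block_mxEul ?block_mxEur ?block_mxEdl ?block_mxEdr ?degV_l ?degV_r degle => H.
- by have := H1 _ _ H; rewrite addn0.
- by have := H2 _ _ H; rewrite addn0.
- by have := H3 _ _ H; rewrite addn0.
- by have := H4 _ _ H; rewrite addn0.
Qed.

Lemma band0_scalar (c : F) : band 0 (c%:M : 'M[F]_m).
Proof.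
move=> i j; rewrite mxE; have [->|Hne] := eqVneq i j; first by rewrite addn0.
by rewrite mulr0n eqxx.
Qed.

Lemma Wm_neq0 : Wm != 0.
Proof.
apply/eqP => /matrixP /(_ ord0 ord_max); rewrite !mxE /= add0n eqxx expr0 => /eqP.
by rewrite oner_eq0.
Qed.

Lemma sp_sblock c1 c2 c3 c4 :
  in_sp (OmegaV F p) (sblock c1 c2 c3 c4) <-> c1 + c4 = 0.
Proof.
have E : sblock c1 c2 c3 c4 *m OmegaV F p + OmegaV F p *m (sblock c1 c2 c3 c4)^T =
   block_mx 0 ((c1 + c4) *: Wm) (- ((c1 + c4) *: Wm)) 0.
  rewrite OmegaV_block /sblock tr_block_mx !tr_scalar_mx !mulmx_block.
  rewrite !mul0mx !mulmx0 !addr0 !add0r !mul_scalar_mx !mul_mx_scalar add_block_mx.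
  by congr block_mx; apply/matrixP => i j; rewrite !mxE; ring.
rewrite /in_sp E; split.
  rewrite -(block_mx0 _ m m m m) => /eq_block_mx [_ /eqP H _ _].
  by move: H; rewrite scaler_eq0 (negbTE Wm_neq0) orbF => /eqP.
by move=> ->; rewrite scale0r oppr0 block_mx0.
Qed.

End P1.

Lemma degeq1 (p : nat) (a b : nat) :
  b%:R - p%:R = a%:R - p%:R + (1:int)%:~R :> rat -> b = a.+1.
Proof.
move/(congr1 (fun z => z + p%:R)); rewrite subrK addrAC subrK (_ : (1:int)%:~R = 1 :> rat) // natr1.
by move/eqP; rewrite eqr_nat => /eqP.
Qed.

Lemma degeq0 (p : nat) (a b : nat) :
  b%:R - p%:R = a%:R - p%:R + (0:int)%:~R :> rat -> b = a.
Proof.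
move/(congr1 (fun z => z + p%:R)); rewrite subrK addrAC subrK (_ : (0:int)%:~R = 0 :> rat) // addr0.
by move/eqP; rewrite eqr_nat => /eqP.
Qed.

Lemma part1 (F : closedFieldType) (charF0 : [pchar F] =i pred0) (p : nat) (x h : 'M[F]_(nV p)) :
     graded_sl2 (@degV p) (OmegaV F p) x h (deltaV F p) ->
     irreducible_sub x h (deltaV F p) (Espace F p) ->
     irreducible_sub x h (deltaV F p) (Fspace F p) ->
     exists X H Y : 'M[F]_(nV p),
       [/\ indep3 X H Y, sl2_triple X H Y &
           forall A, in_lmax (@degV p) (OmegaV F p) x h (deltaV F p) A
                     <-> span3 X H Y A].
Proof.
move=> [_ [Hx Hh _] [_ Hhd Hxd] _] [/and3P [Ex Eh _] _ _] [/and3P [Fx Fh _] _ _].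
have Hn := natr_neq0 charF0 p.*2.
have T1 : forall i j : 'I_(p.*2.+1), Jm F p i j != 0 -> (j:nat).+1 = i.
  move=> i j; rewrite mxE; have [E|E] := eqVneq (i:nat) j.+1; first by rewrite E.
  by rewrite eqxx.
have T2 : forall i j : 'I_(p.*2.+1), (j:nat).+1 = i -> Jm F p i j != 0.
  by move=> i j H; rewrite mxE -H eqxx oner_neq0.
set x1 := ulsubmx x; set x4 := drsubmx x; set h1 := ulsubmx h; set h4 := drsubmx h.
have Exb : x = block_mx x1 0 0 x4 by rewrite -[LHS]submxK (stabE Ex) (stabF Fx).
have Ehb : h = block_mx h1 0 0 h4 by rewrite -[LHS]submxK (stabE Eh) (stabF Fh).
have Hx1 : forall a b, x1 a b != 0 -> (b:nat) = (a:nat).+1.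
  move=> a b H; apply: (@degeq1 p).
  by rewrite -degV_l -degV_l; apply: Hx; rewrite Exb block_mxEul.
have Hx4 : forall a b, x4 a b != 0 -> (b:nat) = (a:nat).+1.
  move=> a b H; apply: (@degeq1 p).
  by rewrite -degV_r -degV_r; apply: Hx; rewrite Exb block_mxEdr.
have Hh1 : forall a b, h1 a b != 0 -> a = b.
  move=> a b H; apply/val_inj/esym; apply: (@degeq0 p).
  by rewrite -degV_l -degV_l; apply: Hh; rewrite Ehb block_mxEul.
have Hh4 : forall a b, h4 a b != 0 -> a = b.
  move=> a b H; apply/val_inj/esym; apply: (@degeq0 p).
  by rewrite -degV_r -degV_r; apply: Hh; rewrite Ehb block_mxEdr.
rewrite Ehb deltaV_block lieb_diag scale_block_mx opp_block_mx scaler0 oppr0 in Hhd.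
have [Eh1 _ _ Eh4] := eq_block_mx Hhd.
rewrite Exb Ehb deltaV_block lieb_diag in Hxd.
have [Ex1 _ _ Ex4] := eq_block_mx Hxd.
have [E14 F14] := uniq_sl2 T1 T2 Hn Hh1 Hh4 Hx1 Hx4 (etrans Eh1 (esym Eh4)) Ex1 Ex4.
rewrite -E14 in Ehb; rewrite -F14 in Exb.
clear Hhd Hxd.
have spanE : forall a b c, a *: sblock p 0 1 0 0 + b *: sblock p 1 0 0 (-1) + c *: sblock p 0 0 1 0
    = sblock p b a c (-b) :> 'M[F]_(nV p).
  by move=> a b c; rewrite !sblockZ !sblockD; apply: sblock_congr; ring.
exists (sblock p 0 1 0 0), (sblock p 1 0 0 (-1)), (sblock p 0 0 1 0); split.
- by move=> a b c; rewrite spanE => /sblock_eq0 [Hb Ha Hc _]; split.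
- by split; rewrite lieb_sblock ?sblockZ ?sblockN; apply: sblock_congr; ring.
move=> A; split.
  move=> [U [[U0 Uadd Uscale Ulieb] HU HA]].
  have Ut : forall B, U B -> U (lieb (deltaV F p) B).
    move=> B HB; apply: Ulieb => //; exists 0, 0, 1.
    by rewrite !scale0r !add0r scale1r.
  have Uiter : forall r B, U B -> U (iter r (lieb (deltaV F p)) B).
    by elim=> // r IH B HB; rewrite iterS; apply: Ut; apply: IH.
  have EA := submxK A.
  set A1 := ulsubmx A in EA; set A2 := ursubmx A in EA;
  set A3 := dlsubmx A in EA; set A4 := drsubmx A in EA.
  have Hb : forall r, [/\ band 0 (iter r (lieb (Jm F p)) A1), band 0 (iter r (lieb (Jm F p)) A2),
      band 0 (iter r (lieb (Jm F p)) A3) & band 0 (iter r (lieb (Jm F p)) A4)].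
    move=> r; apply/nonneg_block; rewrite -iter_block -deltaV_block EA.
    exact: (HU _ (Uiter r _ HA)).2.
  have E1 := Lscalar T1 T2 Hn (fun r => let: And4 H _ _ _ := Hb r in H).
  have E2 := Lscalar T1 T2 Hn (fun r => let: And4 _ H _ _ := Hb r in H).
  have E3 := Lscalar T1 T2 Hn (fun r => let: And4 _ _ H _ := Hb r in H).
  have E4 := Lscalar T1 T2 Hn (fun r => let: And4 _ _ _ H := Hb r in H).
  have EAs : A = sblock p (A1 ord0 ord0) (A2 ord0 ord0) (A3 ord0 ord0) (A4 ord0 ord0).
    by rewrite /sblock -E1 -E2 -E3 -E4 EA.
  have := (HU A HA).1; rewrite EAs sp_sblock => Hsp.
  exists (A2 ord0 ord0), (A1 ord0 ord0), (A3 ord0 ord0); rewrite spanE.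
  apply: sblock_congr => //.
  by apply/eqP; rewrite -addr_eq0 addrC Hsp.
move=> HA.
exists (span3 (sblock p 0 1 0 0) (sblock p 1 0 0 (-1)) (sblock p 0 0 1 0)); split => //.
  split.
  - by exists 0, 0, 0; rewrite !scale0r !addr0.
  - move=> B C [a [b [c ->]]] [a' [b' [c' ->]]]; exists (a + a'), (b + b'), (c + c').
    by rewrite !spanE sblockD; apply: sblock_congr; ring.
  - move=> k B [a [b [c ->]]]; exists (k * a), (k * b), (k * c).
    by rewrite !spanE sblockZ; apply: sblock_congr; ring.
  - move=> S B [a [b [c ->]]] [a' [b' [c' ->]]].
    rewrite spanE Exb Ehb deltaV_block !scale_block_mx !add_block_mx !scaler0 !addr0.
    rewrite lieb_dscalar; exists 0, 0, 0; by rewrite !scale0r !addr0.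
move=> B [a [b [c ->]]]; rewrite spanE; split; first by apply/sp_sblock; rewrite subrr.
apply/nonneg_block; split; apply: band0_scalar.
Qed.

Theorem mainTheorem14 (F : closedFieldType) (charF0 : [pchar F] =i pred0) :
  (forall (p : nat) (x h : 'M[F]_(nV p)),
     graded_sl2 (@degV p) (OmegaV F p) x h (deltaV F p) ->
     irreducible_sub x h (deltaV F p) (Espace F p) ->
     irreducible_sub x h (deltaV F p) (Fspace F p) ->
     exists X H Y : 'M[F]_(nV p),
       [/\ indep3 X H Y, sl2_triple X H Y &
           forall A, in_lmax (@degV p) (OmegaV F p) x h (deltaV F p) A
                     <-> span3 X H Y A])
  /\
  (forall (k : nat) (Om tau x h : 'M[F]_(k.*2.+2)),
     Om^T = - Om -> Om \in unitmx ->
     (forall i j, Om i j != 0 -> degL i + degL j = 0) ->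
     in_sp Om tau ->
     (forall i j : 'I_(k.*2.+2), tau i j != 0 -> (j : nat).+1 = i) ->
     (forall i j : 'I_(k.*2.+2), (j : nat).+1 = i -> tau i j != 0) ->
     graded_sl2 (@degL k) Om x h tau ->
     irreducible_sub x h tau 1%:M ->
     forall A, in_lmax (@degL k) Om x h tau A -> A = 0).
Proof.
split; [exact: part1 | exact: part2].
Qed.
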